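(* For a semi-abelian category $\mathcal C$ the following are equivalent: (i) $\mathcal C$ satisfies (ToN), i.e. every composite of two normal monomorphisms is a normal monomorphism; (ii) every normal subobject is characteristic; (iii) for every object $B$, the kernel functor $\mathrm{Ker}_B\colon\mathsf{Pt}_B(\mathcal C)\to\mathcal C$ creates normal subobjects.
   Context: Semi-abelian category: pointed, Barr-exact, protomodular, with binary coproducts. A normal monomorphism/subobject is a kernel. $\mathsf{Pt}_B(\mathcal C)$: points $(A,\alpha,\beta)$ with $\alpha\colon A\to B$, $\beta\colon B\to A$, $\alpha\beta=1_B$; $\mathrm{Ker}_B(A,\alpha,\beta)=\mathrm{Ker}(\alpha)$. A subobject $h\colon H\rightarrowtail G$ is characteristic if for every split extension $G\xrightarrow{k}A\overset{\alpha}{\underset{\beta}{\rightleftarrows}}B$ (with $k=\ker\alpha$, $\alpha\beta=1_B$) there is a split extension $H\xrightarrow{k'}A'\overset{\alpha'}{\underset{\beta'}{\rightleftarrows}}B$ and a morphism $h'\colon A'\to A$ with $h'k'=kh$, $\alpha h'=\alpha'$, $h'\beta'=\beta$. A functor $F\colon\mathcal C\to\mathcal D$ between pointed categories creates normal subobjects if for every object $A$ and every normal subobject $k'\colon K'\rightarrowtail F(A)$ there is a unique normal subobject $k\colon K\rightarrowtail A$ with $F(k)=k'$. *)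

(* Defs.v *)
From Stdlib Require Import ProofIrrelevance.

Set Implicit Arguments.

(** * Categories (hom-types with Leibniz equality of morphisms) *)
Record Category := {
  Ob :> Type;
  Hom : Ob -> Ob -> Type;
  idm : forall A : Ob, Hom A A;
  comp : forall A B D : Ob, Hom B D -> Hom A B -> Hom A D;
  comp_assoc : forall (A B D E : Ob) (h : Hom D E) (g : Hom B D) (f : Hom A B),
      comp h (comp g f) = comp (comp h g) f;
  id_left : forall (A B : Ob) (f : Hom A B), comp (idm B) f = f;
  id_right : forall (A B : Ob) (f : Hom A B), comp f (idm A) = f }.

Arguments Hom {c} _ _.
Arguments idm {c} _.
Arguments comp {c A B D} _ _.
Notation "g ∘ f" := (comp g f) (at level 40, left associativity).

Section Basics.
Context {C : Category}.

Definition iso {A B : C} (f : Hom A B) : Prop :=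
  exists g : Hom B A, g ∘ f = idm A /\ f ∘ g = idm B.

Definition mono {A B : C} (f : Hom A B) : Prop :=
  forall (Z : C) (u v : Hom Z A), f ∘ u = f ∘ v -> u = v.

Definition sameSubobject {D1 D2 A : C} (m1 : Hom D1 A) (m2 : Hom D2 A) : Prop :=
  exists i : Hom D1 D2, iso i /\ m2 ∘ i = m1.

Definition isInitial (I : C) : Prop :=
  forall X : C, exists f : Hom I X, forall g : Hom I X, g = f.
Definition isTerminal (T : C) : Prop :=
  forall X : C, exists f : Hom X T, forall g : Hom X T, g = f.
Definition isZeroObject (Z : C) : Prop := isInitial Z /\ isTerminal Z.

Definition Pointed : Prop := exists Z : C, isZeroObject Z.

Definition zeroMor {X Y : C} (f : Hom X Y) : Prop :=
  exists (Z : C) (a : Hom X Z) (b : Hom Z Y), isZeroObject Z /\ f = b ∘ a.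

Definition isKernel {K A Y : C} (k : Hom K A) (f : Hom A Y) : Prop :=
  zeroMor (f ∘ k) /\
  forall (Z : C) (g : Hom Z A), zeroMor (f ∘ g) ->
    exists u : Hom Z K, k ∘ u = g /\ forall u' : Hom Z K, k ∘ u' = g -> u' = u.

Definition normalMono {K A : C} (k : Hom K A) : Prop :=
  exists (Y : C) (f : Hom A Y), isKernel k f.

Definition isPullback {P X Y Z : C} (p1 : Hom P X) (p2 : Hom P Y)
    (f : Hom X Z) (g : Hom Y Z) : Prop :=
  f ∘ p1 = g ∘ p2 /\
  forall (Q : C) (q1 : Hom Q X) (q2 : Hom Q Y), f ∘ q1 = g ∘ q2 ->
    exists u : Hom Q P, (p1 ∘ u = q1 /\ p2 ∘ u = q2) /\
      forall u' : Hom Q P, p1 ∘ u' = q1 /\ p2 ∘ u' = q2 -> u' = u.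

Definition hasTerminal : Prop := exists T : C, isTerminal T.
Definition hasPullbacks : Prop :=
  forall (X Y Z : C) (f : Hom X Z) (g : Hom Y Z),
    exists (P : C) (p1 : Hom P X) (p2 : Hom P Y), isPullback p1 p2 f g.
Definition FinitelyComplete : Prop := hasTerminal /\ hasPullbacks.

Definition isCoequalizer {R X Q : C} (f g : Hom R X) (q : Hom X Q) : Prop :=
  q ∘ f = q ∘ g /\
  forall (W : C) (h : Hom X W), h ∘ f = h ∘ g ->
    exists u : Hom Q W, u ∘ q = h /\ forall u' : Hom Q W, u' ∘ q = h -> u' = u.

Definition regularEpi {X Q : C} (e : Hom X Q) : Prop :=
  exists (R : C) (f g : Hom R X), isCoequalizer f g e.

Definition isKernelPair {R X Y : C} (r1 r2 : Hom R X) (f : Hom X Y) : Prop :=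
  isPullback r1 r2 f f.

Definition RegularCat : Prop :=
  FinitelyComplete /\
  (forall (R X Y : C) (r1 r2 : Hom R X) (f : Hom X Y), isKernelPair r1 r2 f ->
     exists (Q : C) (q : Hom X Q), isCoequalizer r1 r2 q) /\
  (forall (X Y Z P : C) (e : Hom X Z) (g : Hom Y Z) (p1 : Hom P X) (p2 : Hom P Y),
     regularEpi e -> isPullback p1 p2 e g -> regularEpi p2).

Definition isEquivRel {R X : C} (r1 r2 : Hom R X) : Prop :=
  (forall (Z : C) (u v : Hom Z R), r1 ∘ u = r1 ∘ v -> r2 ∘ u = r2 ∘ v -> u = v) /\
  (exists d : Hom X R, r1 ∘ d = idm X /\ r2 ∘ d = idm X) /\
  (exists s : Hom R R, r1 ∘ s = r2 /\ r2 ∘ s = r1) /\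
  (forall (Z : C) (a b : Hom Z R), r2 ∘ a = r1 ∘ b ->
     exists t : Hom Z R, r1 ∘ t = r1 ∘ a /\ r2 ∘ t = r2 ∘ b).

Definition BarrExact : Prop :=
  RegularCat /\
  forall (R X : C) (r1 r2 : Hom R X), isEquivRel r1 r2 ->
    exists (Y : C) (f : Hom X Y), isKernelPair r1 r2 f.

(** Bourn protomodularity: change of base of points along any f : X -> Y
    reflects isomorphisms *)
Definition Protomodular : Prop :=
  forall (X Y : C) (f : Hom X Y)
         (A : C) (a : Hom A Y) (b : Hom Y A), a ∘ b = idm Y ->
  forall (A' : C) (a' : Hom A' Y) (b' : Hom Y A'), a' ∘ b' = idm Y ->
  forall phi : Hom A A', a' ∘ phi = a -> phi ∘ b = b' ->
  forall (P : C) (p1 : Hom P X) (p2 : Hom P A), isPullback p1 p2 f a ->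
  forall (P' : C) (p1' : Hom P' X) (p2' : Hom P' A'), isPullback p1' p2' f a' ->
  forall psi : Hom P P', p1' ∘ psi = p1 -> p2' ∘ psi = phi ∘ p2 ->
    iso psi -> iso phi.

Definition hasBinaryCoproducts : Prop :=
  forall X Y : C, exists (S : C) (i1 : Hom X S) (i2 : Hom Y S),
    forall (Z : C) (f : Hom X Z) (g : Hom Y Z),
      exists h : Hom S Z, (h ∘ i1 = f /\ h ∘ i2 = g) /\
        forall h' : Hom S Z, h' ∘ i1 = f /\ h' ∘ i2 = g -> h' = h.

Definition SemiAbelian : Prop :=
  Pointed /\ BarrExact /\ Protomodular /\ hasBinaryCoproducts.

Definition ToN : Prop :=
  forall (A B D : C) (m : Hom A B) (n : Hom B D),
    normalMono m -> normalMono n -> normalMono (n ∘ m).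

Definition characteristic {H G : C} (h : Hom H G) : Prop :=
  forall (A B : C) (k : Hom G A) (a : Hom A B) (b : Hom B A),
    isKernel k a -> a ∘ b = idm B ->
    exists (A' : C) (k' : Hom H A') (a' : Hom A' B) (b' : Hom B A'),
      isKernel k' a' /\ a' ∘ b' = idm B /\
      exists h' : Hom A' A, h' ∘ k' = k ∘ h /\ a ∘ h' = a' /\ h' ∘ b' = b.

End Basics.

Record Point (C : Category) (B : C) := {
  pA : C;
  pal : Hom pA B;
  pbe : Hom B pA;
  psplit : pal ∘ pbe = idm B }.
Arguments Point {C} B.
Arguments pA {C B} _.
Arguments pal {C B} _.
Arguments pbe {C B} _.
Arguments psplit {C B} _.

Definition PtHom {C : Category} {B : C} (P Q : Point B) : Type :=
  { phi : Hom (pA P) (pA Q) | pal Q ∘ phi = pal P /\ phi ∘ pbe P = pbe Q }.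

Section PtCat.
Variables (C : Category) (B : C).

Program Definition Pt_id (P : Point B) : PtHom P P := exist _ (idm (pA P)) _.
Next Obligation. split; [apply id_right | apply id_left]. Qed.

Program Definition Pt_comp (P Q R : Point B) (g : PtHom Q R) (f : PtHom P Q) : PtHom P R :=
  exist _ (proj1_sig g ∘ proj1_sig f) _.
Next Obligation.
  destruct g as [g [g1 g2]], f as [f [f1 f2]]; simpl.
  split; [rewrite comp_assoc, g1; exact f1 | rewrite <- comp_assoc, f2; exact g2].
Qed.

Lemma PtHom_eq (P Q : Point B) (f g : PtHom P Q) : proj1_sig f = proj1_sig g -> f = g.
Proof.
  destruct f as [f pf], g as [g pg]; simpl; intros ->.
  f_equal; apply proof_irrelevance.
Qed.

Definition Pt : Category.
Proof.
  refine {| Ob := Point B; Hom := @PtHom C B; idm := Pt_id; comp := Pt_comp |}.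
  - intros; apply PtHom_eq; simpl; apply comp_assoc.
  - intros; apply PtHom_eq; simpl; apply id_left.
  - intros; apply PtHom_eq; simpl; apply id_right.
Defined.
End PtCat.

(** The kernel functor Ker_B : Pt_B(C) -> C, applied to a morphism of points
    m : Q -> P, computed w.r.t. a given kernel k of pal P, represents the
    subobject h of dom k: there are a kernel k' of pal Q and the induced
    map u = Ker_B(m) with k ∘ u = m ∘ k', and u is the same subobject as h. *)
Definition KerImageIs {C : Category} {B : C} {P Q : Point B} {G H : C}
    (k : Hom G (pA P)) (m : PtHom Q P) (h : Hom H G) : Prop :=
  exists (K' : C) (k' : Hom K' (pA Q)) (u : Hom K' G),
    isKernel k' (pal Q) /\ k ∘ u = proj1_sig m ∘ k' /\ sameSubobject u h.

Definition KerCreatesNormalSubobjects (C : Category) (B : C) : Prop :=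
  forall (P : Point B) (G : C) (k : Hom G (pA P)), isKernel k (pal P) ->
  forall (H : C) (h : Hom H G), normalMono h ->
    (exists (Q : Point B) (m : PtHom Q P),
        @normalMono (Pt C B) Q P m /\ KerImageIs k m h) /\
    (forall (Q1 Q2 : Point B) (m1 : PtHom Q1 P) (m2 : PtHom Q2 P),
        @normalMono (Pt C B) Q1 P m1 -> @normalMono (Pt C B) Q2 P m2 ->
        KerImageIs k m1 h -> KerImageIs k m2 h ->
        @sameSubobject (Pt C B) Q1 Q2 P m1 m2).

(* Main.v *)
Require Import Defs.

Ltac ra := repeat rewrite <- comp_assoc.
Lemma idl {C : Category} {A B : C} (f : Hom A B) : idm B ∘ f = f.
Proof. apply id_left. Qed.
Lemma idr {C : Category} {A B : C} (f : Hom A B) : f ∘ idm A = f.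
Proof. apply id_right. Qed.

Lemma cx {C : Category} {X Y Z W : C} (f : Hom Y Z) (g : Hom X Y) (k : Hom X Z) :
  f ∘ g = k -> forall (x : Hom W X), f ∘ (g ∘ x) = k ∘ x.
Proof. intros E x; rewrite comp_assoc, E; reflexivity. Qed.
Ltac crw H := first [rewrite H | rewrite (cx _ _ _ H)]; ra.
Ltac nrm := ra; rewrite ?idl, ?idr.

Lemma zm_l {C : Category} {X Y Z : C} (f : Hom X Y) (g : Hom Y Z) :
  zeroMor f -> zeroMor (g ∘ f).
Proof. intros (W & a & b & hW & ->). exists W, a, (g ∘ b); split; auto. apply comp_assoc. Qed.

Lemma zm_r {C : Category} {X Y Z : C} (f : Hom Y Z) (g : Hom X Y) :
  zeroMor f -> zeroMor (f ∘ g).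
Proof. intros (W & a & b & hW & ->). exists W, (a ∘ g), b; split; auto. symmetry; apply comp_assoc. Qed.

Lemma zero_canon {C : Category} (Z0 : C) (hZ : isZeroObject Z0) {X Y : C} (f : Hom X Y) :
  zeroMor f -> forall (a : Hom X Z0) (b : Hom Z0 Y), f = b ∘ a.
Proof.
  intros (W & a' & b' & [hi ht] & ->) a b.
  destruct hZ as [hi0 ht0].
  destruct (hi0 W) as [e _]. destruct (ht0 W) as [e' _].
  destruct (hi W) as [iw Hiw].
  assert (E1 : e ∘ e' = idm W) by (rewrite (Hiw (e ∘ e')), (Hiw (idm W)); reflexivity).
  destruct (hi0 Y) as [i0 Hi0]. destruct (ht0 X) as [t0 Ht0].
  assert (b' = b' ∘ (e ∘ e')) by (rewrite E1; symmetry; apply idr).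
  rewrite H, comp_assoc, <- comp_assoc.
  rewrite (Hi0 (b' ∘ e)), (Hi0 b), (Ht0 (e' ∘ a')), (Ht0 a); reflexivity.
Qed.

Lemma zero_via {C : Category} (Z0 : C) (hZ : isZeroObject Z0) {X Y : C} (a : Hom X Z0) (b : Hom Z0 Y) :
  zeroMor (b ∘ a).
Proof. exists Z0, a, b; auto. Qed.

Lemma zero_eq {C : Category} (hP : Pointed (C:=C)) {X Y : C} (f g : Hom X Y) :
  zeroMor f -> zeroMor g -> f = g.
Proof.
  intros zf zg. destruct hP as [Z0 hZ].
  destruct (proj1 hZ Y) as [b _]. destruct (proj2 hZ X) as [a _].
  rewrite (zero_canon Z0 hZ f zf a b), (zero_canon Z0 hZ g zg a b); reflexivity.
Qed.

Lemma zero_ex {C : Category} (hP : Pointed (C:=C)) (X Y : C) : exists f : Hom X Y, zeroMor f.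
Proof.
  destruct hP as [Z0 hZ].
  destruct (proj1 hZ Y) as [b _]. destruct (proj2 hZ X) as [a _].
  exists (b ∘ a); apply zero_via; auto.
Qed.

Lemma kernel_mono {C : Category} {K A Y : C} (k : Hom K A) (f : Hom A Y) :
  isKernel k f -> mono k.
Proof.
  intros [hz hu] Z u v E.
  destruct (hu Z (k ∘ u)) as [w [_ Hw]].
  { rewrite comp_assoc; apply zm_r; auto. }
  rewrite (Hw u eq_refl), (Hw v (eq_sym E)); reflexivity.
Qed.

Lemma mono_comp {C : Category} {X Y Z : C} (f : Hom Y Z) (g : Hom X Y) :
  mono f -> mono g -> mono (f ∘ g).
Proof. intros mf mg W u v E. apply mg, mf. rewrite !comp_assoc; auto. Qed.

Lemma iso_mono {C : Category} {X Y : C} (f : Hom X Y) : iso f -> mono f.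
Proof.
  intros [g [E1 E2]] W u v E.
  rewrite <- (idl u), <- (idl v), <- E1, <- !comp_assoc, E; reflexivity.
Qed.

Lemma pb_ext {C : Category} {P X Y Z : C} (p1 : Hom P X) (p2 : Hom P Y) (f : Hom X Z) (g : Hom Y Z) :
  isPullback p1 p2 f g -> forall (W : C) (u v : Hom W P), p1 ∘ u = p1 ∘ v -> p2 ∘ u = p2 ∘ v -> u = v.
Proof.
  intros [Hc Hu] W u v E1 E2.
  destruct (Hu W (p1 ∘ v) (p2 ∘ v)) as [w [_ Hw]].
  { rewrite !comp_assoc, Hc; reflexivity. }
  rewrite (Hw u (conj E1 E2)), (Hw v (conj eq_refl eq_refl)); reflexivity.
Qed.

Lemma pb_lift {C : Category} {P X Y Z : C} (p1 : Hom P X) (p2 : Hom P Y) (f : Hom X Z) (g : Hom Y Z) :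
  isPullback p1 p2 f g -> forall (W : C) (q1 : Hom W X) (q2 : Hom W Y), f ∘ q1 = g ∘ q2 ->
  exists u : Hom W P, p1 ∘ u = q1 /\ p2 ∘ u = q2.
Proof. intros [_ Hu] W q1 q2 E. destruct (Hu W q1 q2 E) as [u [H _]]; eauto. Qed.

Lemma pb_mono {C : Category} {P X Y Z : C} (p1 : Hom P X) (p2 : Hom P Y) (f : Hom X Z) (g : Hom Y Z) :
  isPullback p1 p2 f g -> mono f -> mono p2.
Proof.
  intros Hp mf W u v E. apply (pb_ext _ _ _ _ Hp); auto.
  apply mf. rewrite !comp_assoc, (proj1 Hp), <- !comp_assoc, E; reflexivity.
Qed.

Lemma term_uniq {C : Category} (Z0 : C) (hZ : isZeroObject Z0) {X : C} (u v : Hom X Z0) : u = v.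
Proof. destruct (proj2 hZ X) as [t Ht]. rewrite (Ht u), (Ht v); auto. Qed.

Lemma kernel_pullback {C : Category} (Z0 : C) (hZ : isZeroObject Z0) {K X E : C}
  (k : Hom K X) (p : Hom X E) : isKernel k p ->
  forall (t : Hom K Z0) (z : Hom Z0 E), isPullback t k z p.
Proof.
  intros [hz hu] t z. assert (hP : Pointed (C:=C)) by (exists Z0; auto).
  split.
  - apply (zero_eq hP); auto. apply zero_via; auto.
  - intros Q q1 q2 E0.
    destruct (hu Q q2) as [u [Hu1 Hu2]].
    { rewrite <- E0; apply zero_via; auto. }
    exists u; split; [split; auto; apply (term_uniq Z0 hZ)|].
    intros u' [_ H']; auto.
Qed.

Lemma kernel_exists {C : Category} (Z0 : C) (hZ : isZeroObject Z0) (hPB : hasPullbacks (C:=C))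
  {X E : C} (p : Hom X E) : exists (K : C) (k : Hom K X), isKernel k p.
Proof.
  assert (hP : Pointed (C:=C)) by (exists Z0; auto).
  destruct (proj1 hZ E) as [z _].
  destruct (hPB _ _ _ z p) as (P & p1 & p2 & Hp).
  exists P, p2. split.
  - rewrite <- (proj1 Hp). apply zero_via; auto.
  - intros T g Hg.
    destruct (proj2 hZ T) as [t _].
    destruct (proj2 Hp T t g) as [u [[Hu1 Hu2] Hu]].
    { apply (zero_eq hP); auto. apply zero_via; auto. }
    exists u; split; auto.
    intros u' Hu'. apply Hu; split; auto. apply (term_uniq Z0 hZ).
Qed.

Lemma JSE {C : Category} (Z0 : C) (hZ : isZeroObject Z0) (hPB : hasPullbacks (C:=C))
  (hPM : Protomodular (C:=C)) {X E M : C} (p : Hom X E) (s : Hom E X) (ps : p ∘ s = idm E)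
  (mu : Hom M X) (mmu : mono mu) (s1 : Hom E M) (Hs1 : mu ∘ s1 = s)
  (Hk : forall (T : C) (g : Hom T X), zeroMor (p ∘ g) -> exists w, mu ∘ w = g) : iso mu.
Proof.
  destruct (kernel_exists Z0 hZ hPB p) as (K & k & Hk0).
  destruct (Hk K k (proj1 Hk0)) as [k1 Hk1].
  assert (Kk1 : isKernel k1 (p ∘ mu)).
  { split.
    - rewrite <- comp_assoc, Hk1. exact (proj1 Hk0).
    - intros T g Hg. destruct (proj2 Hk0 T (mu ∘ g)) as [v [Hv _]].
      { rewrite comp_assoc; auto. }
      exists v; split.
      + apply mmu. rewrite comp_assoc, Hk1; auto.
      + intros u' Hu'. apply (kernel_mono _ _ Hk0). rewrite Hv, <- Hk1, <- comp_assoc, Hu'; auto. }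
  destruct (proj1 hZ E) as [z _]. destruct (proj2 hZ K) as [t _].
  eapply (hPM Z0 E z M (p ∘ mu) s1 _ X p s ps mu eq_refl Hs1 K t k1
            (kernel_pullback Z0 hZ _ _ Kk1 t z) K t k (kernel_pullback Z0 hZ _ _ Hk0 t z) (idm K)).
  - apply idr.
  - rewrite idr; auto.
  - exists (idm K); split; apply idl.
  Unshelve. rewrite <- comp_assoc, Hs1; auto.
Qed.

Lemma factor_lemma {C : Category} (Z0 : C) (hZ : isZeroObject Z0) (hPB : hasPullbacks (C:=C))
  (hPM : Protomodular (C:=C)) {X E A' R : C} (p : Hom X E) (s : Hom E X) (ps : p ∘ s = idm E)
  (h : Hom A' R) (mh : mono h) (rho : Hom X R)
  (Hs : exists w, h ∘ w = rho ∘ s)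
  (Hk : forall (T : C) (g : Hom T X), zeroMor (p ∘ g) -> exists w, h ∘ w = rho ∘ g) :
  exists t, h ∘ t = rho.
Proof.
  destruct (hPB _ _ _ h rho) as (M & m1 & mu & Hp).
  assert (mmu : mono mu) by (exact (pb_mono _ _ _ _ Hp mh)).
  destruct Hs as [w Hw].
  destruct (pb_lift _ _ _ _ Hp _ w s Hw) as [s1 [_ Hs1]].
  destruct (JSE Z0 hZ hPB hPM p s ps mu mmu s1 Hs1) as [mi [Hmi1 Hmi2]].
  { intros T g Hg. destruct (Hk T g Hg) as [w' Hw'].
    destruct (pb_lift _ _ _ _ Hp _ w' g Hw') as [l [_ Hl]]. eauto. }
  exists (m1 ∘ mi). rewrite comp_assoc, (proj1 Hp), <- comp_assoc, Hmi2; apply idr.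
Qed.

Lemma L_mono {C : Category} (Z0 : C) (hZ : isZeroObject Z0) (hPB : hasPullbacks (C:=C))
  (hPM : Protomodular (C:=C)) {X E X' : C} (p : Hom X E) (s : Hom E X) (ps : p ∘ s = idm E)
  (phi : Hom X X') (p' : Hom X' E) (Hp' : p' ∘ phi = p)
  (Hinj : forall (T : C) (w1 w2 : Hom T X), zeroMor (p ∘ w1) -> zeroMor (p ∘ w2) ->
           phi ∘ w1 = phi ∘ w2 -> w1 = w2) : mono phi.
Proof.
  destruct (hPB _ _ _ phi phi) as (K & q1 & q2 & Hp).
  destruct (pb_lift _ _ _ _ Hp _ (idm X) (idm X) eq_refl) as [d [Hd1 Hd2]].
  assert (md : mono d).
  { intros W u v Ee. rewrite <- (idl u), <- (idl v), <- Hd1, <- !comp_assoc, Ee; auto. }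
  assert (pss : p ∘ q1 ∘ (d ∘ s) = idm E).
  { rewrite <- comp_assoc, (comp_assoc _ _ _ _ _ q1 d s), Hd1, idl; auto. }
  destruct (factor_lemma Z0 hZ hPB hPM (p ∘ q1) (d ∘ s) pss d md (idm K)) as [t Ht].
  - exists s; rewrite idl; auto.
  - intros T g Hg. exists (q1 ∘ g). rewrite idl.
    assert (E2 : q1 ∘ g = q2 ∘ g).
    { apply Hinj.
      - rewrite comp_assoc; auto.
      - rewrite <- Hp'. rewrite <- Hp' in Hg.
        replace (p' ∘ phi ∘ (q2 ∘ g)) with (p' ∘ phi ∘ (q1 ∘ g)).
        { rewrite comp_assoc; auto. }
        rewrite <- !comp_assoc, !(comp_assoc _ _ _ _ _ phi), (proj1 Hp); auto.
      - rewrite !comp_assoc, (proj1 Hp); auto. }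
    apply (pb_ext _ _ _ _ Hp).
    + rewrite comp_assoc, Hd1, idl; auto.
    + rewrite comp_assoc, Hd2, idl; auto.
  - intros W u v Ee.
    destruct (pb_lift _ _ _ _ Hp _ u v Ee) as [w [Hw1 Hw2]].
    rewrite <- Hw1, <- Hw2, <- (idl w), <- Ht, !comp_assoc, Hd1, Hd2; auto.
Qed.


Lemma normal_mono {C : Category} {K A : C} (k : Hom K A) : normalMono k -> mono k.
Proof. intros (Y & f & Hk). exact (kernel_mono _ _ Hk). Qed.

Lemma T3 (C : Category) (HC : SemiAbelian (C:=C)) :
  (forall (H G : C) (h : Hom H G), normalMono h -> characteristic h) -> ToN (C:=C).
Proof.
  intros Hch.
  destruct HC as [hP [hBE [hPM _]]].
  destruct hP as [Z0 hZ]. assert (hP : Pointed (C:=C)) by (exists Z0; auto).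
  destruct hBE as [[[_ hPB] _] hEff].
  intros A B D m n Nm [Y [f Hn]].
  pose proof (normal_mono m Nm) as mm.
  pose proof (kernel_mono _ _ Hn) as mn.
  destruct (hPB D D Y f f) as (R & r1 & r2 & HR).
  destruct (pb_lift _ _ _ _ HR _ (idm D) (idm D) eq_refl) as [d [Hd1 Hd2]].
  destruct (zero_ex hP B D) as [zBD HzBD].
  destruct (pb_lift _ _ _ _ HR _ zBD n) as [io [Hio1 Hio2]].
  { apply (zero_eq hP). apply zm_l; auto. exact (proj1 Hn). }
  assert (Kio : isKernel io r1).
  { split.
    - rewrite Hio1; auto.
    - intros T g Hg.
      destruct (proj2 Hn T (r2 ∘ g)) as [v [Hv Hvu]].
      { rewrite comp_assoc, <- (proj1 HR), <- comp_assoc. apply zm_l; auto. }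
      exists v; split.
      + apply (pb_ext _ _ _ _ HR).
        * crw Hio1. apply (zero_eq hP); auto. apply zm_r; auto.
        * crw Hio2. auto.
      + intros u' Hu'. apply Hvu. rewrite <- Hu', comp_assoc, Hio2; auto. }
  assert (mio : mono io) by exact (kernel_mono _ _ Kio).
  destruct (Hch _ _ m Nm R D io r1 d Kio Hd1) as
      (A' & k' & a' & b' & Kk' & ab' & h' & E1 & E2 & E3).
  assert (mh : mono h').
  { apply (L_mono Z0 hZ hPB hPM a' b' ab' h' r1 E2).
    intros T w1 w2 z1 z2 Ew.
    destruct (proj2 Kk' T w1 z1) as [v1 [Hv1 _]].
    destruct (proj2 Kk' T w2 z2) as [v2 [Hv2 _]].
    subst w1 w2. f_equal. apply (mono_comp io m mio mm).
    rewrite <- !(cx _ _ _ E1); auto. }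
  assert (Hnm0 : forall T (w : Hom T A), zeroMor (f ∘ (n ∘ (m ∘ w)))).
  { intros T w. rewrite comp_assoc. apply zm_r. exact (proj1 Hn). }
  assert (P1 : forall T (w1 w2 : Hom T A), exists v, a' ∘ v = n ∘ (m ∘ w1) /\ r2 ∘ (h' ∘ v) = n ∘ (m ∘ w2)).
  { destruct (proj2 hZ A) as [tA _].
    destruct (hPB A A Z0 tA tA) as (PP & q1 & q2 & Hq).
    destruct (pb_lift _ _ _ _ Hq _ (idm A) (idm A) eq_refl) as [Dl [HD1 HD2]].
    destruct (pb_lift _ _ _ _ HR _ (n ∘ (m ∘ q1)) (n ∘ (m ∘ q2))) as [rho [Hr1 Hr2]].
    { apply (zero_eq hP); auto. }
    destruct (factor_lemma Z0 hZ hPB hPM q1 Dl HD1 h' mh rho) as [t Ht].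
    - exists (b' ∘ (n ∘ m)). apply (pb_ext _ _ _ _ HR).
      + crw E3. crw Hd1. crw Hr1. nrm. crw HD1. nrm. auto.
      + crw E3. crw Hd2. crw Hr2. nrm. crw HD2. nrm. auto.
    - intros T g Hg. exists (k' ∘ (q2 ∘ g)). apply (pb_ext _ _ _ _ HR).
      + crw E1. crw Hio1. crw Hr1. apply (zero_eq hP).
        * apply zm_r; auto.
        * apply zm_l, zm_l; auto.
      + crw E1. crw Hio2. crw Hr2. nrm. auto.
    - intros T w1 w2.
      destruct (pb_lift _ _ _ _ Hq _ w1 w2 ltac:(apply (term_uniq Z0 hZ))) as [pw [Hpw1 Hpw2]].
      exists (t ∘ pw). split.
      + rewrite <- E2. ra. crw Ht. crw Hr1. nrm. rewrite Hpw1; auto.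
      + crw Ht. crw Hr2. nrm. rewrite Hpw2; auto. }
  assert (Hfr : forall T (x : Hom T R), f ∘ (r2 ∘ x) = f ∘ (r1 ∘ x)).
  { intros T x. rewrite !comp_assoc, (proj1 HR); auto. }
  assert (E2x : forall T (x : Hom T A'), r1 ∘ (h' ∘ x) = a' ∘ x) by (intros; apply cx; auto).
  assert (LE : forall T (al be : Hom T A'), a' ∘ al = a' ∘ be ->
     exists t, a' ∘ t = r2 ∘ (h' ∘ al) /\ r2 ∘ (h' ∘ t) = r2 ∘ (h' ∘ be)).
  { destruct (hPB A' A' D a' a') as (Tt & q1 & q2 & Hq).
    destruct (pb_lift _ _ _ _ Hq _ b' b' eq_refl) as [sg [Hs1 Hs2]].
    destruct (pb_lift _ _ _ _ HR _ (r2 ∘ (h' ∘ q1)) (r2 ∘ (h' ∘ q2))) as [rho [Hr1 Hr2]].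
    { rewrite !Hfr, !E2x, (proj1 Hq); auto. }
    assert (pss : a' ∘ q1 ∘ sg = idm D) by (ra; crw Hs1; auto).
    destruct (factor_lemma Z0 hZ hPB hPM (a' ∘ q1) sg pss h' mh rho) as [t0 Ht0].
    - exists b'. apply (pb_ext _ _ _ _ HR).
      + crw E3. crw Hd1. crw Hr1. crw Hs1. crw E3. crw Hd2. auto.
      + crw E3. crw Hd2. crw Hr2. crw Hs2. crw E3. crw Hd2. auto.
    - intros T g Hg.
      assert (Hg2 : zeroMor (a' ∘ (q2 ∘ g))).
      { rewrite comp_assoc, <- (proj1 Hq); auto. }
      rewrite <- comp_assoc in Hg.
      destruct (proj2 Kk' T _ Hg) as [w1 [Hw1 _]].
      destruct (proj2 Kk' T _ Hg2) as [w2 [Hw2 _]].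
      destruct (P1 T w1 w2) as [v [Hv1 Hv2]].
      exists v. apply (pb_ext _ _ _ _ HR).
      + rewrite E2x, Hv1. crw Hr1. rewrite <- Hw1. crw E1. crw Hio2. auto.
      + rewrite Hv2. crw Hr2. rewrite <- Hw2. crw E1. crw Hio2. auto.
    - intros T al be Hab.
      destruct (pb_lift _ _ _ _ Hq _ al be Hab) as [pw [Hpw1 Hpw2]].
      exists (t0 ∘ pw). split.
      + rewrite <- E2. ra. crw Ht0. crw Hr1. rewrite Hpw1; auto.
      + crw Ht0. crw Hr2. rewrite Hpw2; auto. }
  assert (Hsym : exists sy, a' ∘ sy = r2 ∘ h' /\ r2 ∘ h' ∘ sy = a').
  { destruct (LE A' (idm A') (b' ∘ a')) as [t [Ht1 Ht2]].
    { rewrite idr, comp_assoc, ab', idl; auto. }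
    exists t. rewrite idr in Ht1. split; auto. ra. rewrite Ht2. crw E3. crw Hd2. nrm. auto. }
  destruct Hsym as [sy [Hsy1 Hsy2]].
  assert (Heq : isEquivRel a' (r2 ∘ h')).
  { split; [|split; [|split]].
    - intros T u v Hu Hv. apply mh. apply (pb_ext _ _ _ _ HR).
      + rewrite !E2x; auto.
      + ra; ra. rewrite <- !comp_assoc in Hv; auto.
    - exists b'. split; auto. ra. crw E3. auto.
    - exists sy; auto.
    - intros T a b Hab. ra. rewrite <- comp_assoc in Hab.
      destruct (LE T (sy ∘ a) b) as [t [Ht1 Ht2]].
      { crw Hsy1. auto. }
      exists t. split.
      + rewrite Ht1, (comp_assoc _ _ _ _ _ r2 h'), comp_assoc, Hsy2; auto.
      + ra; auto. }
  destruct (hEff A' D a' (r2 ∘ h') Heq) as (W & g & Hkp).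
  assert (Hnm : r2 ∘ (h' ∘ k') = n ∘ m) by (crw E1; crw Hio2; auto).
  exists W, g. split.
  - rewrite <- Hnm, (comp_assoc _ _ _ _ _ r2 h' k'), (comp_assoc _ _ _ _ _ g (r2 ∘ h') k'), <- (proj1 Hkp), <- comp_assoc. apply zm_l. exact (proj1 Kk').
  - intros T e He.
    destruct (zero_ex hP T D) as [z0 Hz0].
    destruct (pb_lift _ _ _ _ Hkp _ z0 e) as [u [Hu1 Hu2]].
    { apply (zero_eq hP); auto. apply zm_l; auto. }
    destruct (proj2 Kk' T u) as [v [Hv _]].
    { rewrite Hu1; auto. }
    assert (Ev : n ∘ m ∘ v = e).
    { rewrite <- Hnm, <- Hu2, <- Hv. ra. auto. }
    exists v. split; auto.
    intros u' Hu'. apply (mono_comp n m mn mm). rewrite Hu', Ev; auto.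
Qed.

Definition B0 {C : Category} (B : C) : Point B :=
  {| pA := B; pal := idm B; pbe := idm B; psplit := idl (idm B) |}.

Definition toB0 {C : Category} {B : C} (X : Point B) : @Hom (Pt C B) X (B0 B).
Proof. exists (pal X). split; [apply idl | apply psplit]. Defined.

Definition fromB0 {C : Category} {B : C} (X : Point B) : @Hom (Pt C B) (B0 B) X.
Proof. exists (pbe X). split; [apply psplit | apply idr]. Defined.

Lemma Pt_zero {C : Category} (B : C) : @isZeroObject (Pt C B) (B0 B).
Proof.
  split.
  - intros X. exists (fromB0 X). intros g. apply PtHom_eq. simpl.
    destruct g as [g [g1 g2]]. simpl in *. rewrite <- g2. symmetry; apply idr.
  - intros X. exists (toB0 X). intros g. apply PtHom_eq. simpl.
    destruct g as [g [g1 g2]]. simpl in *. rewrite <- g1. symmetry; apply idl.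
Qed.

Lemma Pt_zeroMor {C : Category} {B : C} (P Q : Point B) (f : PtHom P Q) :
  @zeroMor (Pt C B) P Q f <-> proj1_sig f = pbe Q ∘ pal P.
Proof.
  split.
  - intros Hz. rewrite (zero_canon (C:=Pt C B) (B0 B) (Pt_zero B) f Hz (toB0 P) (fromB0 Q)).
    reflexivity.
  - intros E. exists (B0 B), (toB0 P), (fromB0 Q). split; [apply Pt_zero|].
    apply PtHom_eq. simpl. exact E.
Qed.

Lemma kernel_iso {C : Category} {K' H X Y : C} (k' : Hom K' X) (p : Hom X Y) (i : Hom K' H) (j : Hom H K')
  (ji : j ∘ i = idm K') (ij : i ∘ j = idm H) : isKernel k' p -> isKernel (k' ∘ j) p.
Proof.
  intros [hz hu]. split.
  - rewrite comp_assoc; apply zm_r; auto.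
  - intros T g Hg. destruct (hu T g Hg) as [v [Hv Hvu]].
    exists (i ∘ v). split.
    + rewrite <- comp_assoc, (comp_assoc _ _ _ _ _ j i v), ji, idl; auto.
    + intros u' Hu'. rewrite <- (Hvu (j ∘ u')).
      * rewrite comp_assoc, ij, idl; auto.
      * rewrite comp_assoc; auto.
Qed.

Lemma T2 (C : Category) :
  (forall B : C, KerCreatesNormalSubobjects C B) ->
  (forall (H G : C) (h : Hom H G), normalMono h -> characteristic h).
Proof.
  intros Hcr H G h Nh A B k a b Kk ab.
  set (P := {| pA := A; pal := a; pbe := b; psplit := ab |} : Point B).
  destruct (Hcr B P G k Kk H h Nh) as [[Q [m [_ KI]]] _].
  destruct KI as (K' & k' & u & Kk' & Eku & i & [j [ji ij]] & Ei).
  exists (pA Q), (k' ∘ j), (pal Q), (pbe Q).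
  split; [apply (kernel_iso k' (pal Q) i j ji ij Kk')|].
  split; [apply psplit|].
  destruct m as [h' [Hm1 Hm2]]. simpl in *.
  exists h'. split; [|split; auto].
  rewrite comp_assoc, <- Eku, <- Ei, <- comp_assoc, <- comp_assoc, ij, idr; auto.
Qed.


Lemma ker_mono {C : Category} (Z0 : C) (hZ : isZeroObject Z0) (hPB : hasPullbacks (C:=C))
  (hPM : Protomodular (C:=C)) {B : C} (P Q : Point B) (G H : C) (k : Hom G (pA P))
  (Kk : isKernel k (pal P)) (h : Hom H G) (mh : mono h) (m : PtHom Q P) :
  KerImageIs k m h -> mono (proj1_sig m).
Proof.
  intros (K' & k' & u & Kk' & Eku & i & ii & Ei).
  destruct m as [m [Hm1 Hm2]]; simpl in *.
  apply (L_mono Z0 hZ hPB hPM (pal Q) (pbe Q) (psplit Q) m (pal P) Hm1).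
  intros T w1 w2 z1 z2 Ew.
  destruct (proj2 Kk' T w1 z1) as [v1 [Hv1 _]].
  destruct (proj2 Kk' T w2 z2) as [v2 [Hv2 _]].
  subst w1 w2. f_equal.
  assert (mu : mono u) by (rewrite <- Ei; apply mono_comp; auto; apply iso_mono; auto).
  apply (mono_comp k u (kernel_mono _ _ Kk) mu).
  ra. rewrite !(cx _ _ _ Eku). ra. auto.
Qed.

Lemma ker_fac {C : Category} (Z0 : C) (hZ : isZeroObject Z0) (hPB : hasPullbacks (C:=C))
  (hPM : Protomodular (C:=C)) {B : C} (P Q1 Q2 : Point B) (G H : C) (k : Hom G (pA P))
  (Kk : isKernel k (pal P)) (h : Hom H G) (mh : mono h) (m1 : PtHom Q1 P) (m2 : PtHom Q2 P) :
  KerImageIs k m1 h -> KerImageIs k m2 h -> mono (proj1_sig m2) ->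
  exists t, proj1_sig m2 ∘ t = proj1_sig m1.
Proof.
  intros (K1 & k1 & u1 & Kk1 & Eku1 & i1 & ii1 & Ei1)
         (K2 & k2 & u2 & Kk2 & Eku2 & i2 & [j2 [ji2 ij2]] & Ei2) mm2.
  apply (factor_lemma Z0 hZ hPB hPM (pal Q1) (pbe Q1) (psplit Q1) _ mm2).
  - exists (pbe Q2). rewrite (proj2 (proj2_sig m1)), (proj2 (proj2_sig m2)); auto.
  - intros T g Hg. destruct (proj2 Kk1 T g Hg) as [v [Hv _]]. subst g.
    exists (k2 ∘ (j2 ∘ (i1 ∘ v))).
    rewrite (cx _ _ _ (eq_sym Eku2)), (cx _ _ _ (eq_sym Eku1)), <- Ei1, <- Ei2. ra.
    rewrite (cx _ _ _ ij2). nrm. auto.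
Qed.

Lemma T1 (C : Category) (HC : SemiAbelian (C:=C)) :
  ToN (C:=C) -> forall B : C, KerCreatesNormalSubobjects C B.
Proof.
  intros HT.
  destruct HC as [hP [hBE [hPM _]]].
  destruct hP as [Z0 hZ]. assert (hP : Pointed (C:=C)) by (exists Z0; auto).
  destruct hBE as [[[_ hPB] _] _].
  intros B P G k Kk H h Nh.
  assert (mh : mono h) by exact (normal_mono h Nh).
  split.
  2:{ intros Q1 Q2 m1 m2 _ _ KI1 KI2.
      pose proof (ker_mono Z0 hZ hPB hPM P Q1 G H k Kk h mh m1 KI1) as mm1.
      pose proof (ker_mono Z0 hZ hPB hPM P Q2 G H k Kk h mh m2 KI2) as mm2.
      destruct (ker_fac Z0 hZ hPB hPM P Q1 Q2 G H k Kk h mh m1 m2 KI1 KI2 mm2) as [t1 Ht1].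
      destruct (ker_fac Z0 hZ hPB hPM P Q2 Q1 G H k Kk h mh m2 m1 KI2 KI1 mm1) as [t2 Ht2].
      destruct m1 as [m1 [Hm11 Hm12]], m2 as [m2 [Hm21 Hm22]]; simpl in *.
      assert (T12 : t1 ∘ t2 = idm _).
      { apply mm2. rewrite comp_assoc, Ht1, Ht2, idr; auto. }
      assert (T21 : t2 ∘ t1 = idm _).
      { apply mm1. rewrite comp_assoc, Ht2, Ht1, idr; auto. }
      assert (P1 : pal Q2 ∘ t1 = pal Q1 /\ t1 ∘ pbe Q1 = pbe Q2).
      { split.
        - rewrite <- Hm21, <- comp_assoc, Ht1; auto.
        - apply mm2. rewrite comp_assoc, Ht1, Hm12, Hm22; auto. }
      assert (P2 : pal Q1 ∘ t2 = pal Q2 /\ t2 ∘ pbe Q2 = pbe Q1).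
      { split.
        - rewrite <- Hm11, <- comp_assoc, Ht2; auto.
        - apply mm1. rewrite comp_assoc, Ht2, Hm12, Hm22; auto. }
      exists (exist _ t1 P1). split.
      - exists (exist _ t2 P2). split; apply PtHom_eq; simpl; auto.
      - apply PtHom_eq; simpl; auto. }
  assert (mk : mono k) by exact (kernel_mono _ _ Kk).
  destruct (HT _ _ _ h k Nh (ex_intro _ B (ex_intro _ (pal P) Kk))) as (Y0 & q & Kq).
  destruct (proj2 hZ Y0) as [tY _]. destruct (proj2 hZ B) as [tB _].
  destruct (hPB Y0 B Z0 tY tB) as (PP & pi1 & pi2 & Hpr).
  destruct (pb_lift _ _ _ _ Hpr _ q (pal P) ltac:(apply (term_uniq Z0 hZ))) as [F [HF1 HF2]].
  destruct (pb_lift _ _ _ _ Hpr _ (q ∘ pbe P) (idm B) ltac:(apply (term_uniq Z0 hZ))) as [Zs [HZ1 HZ2]].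
  set (Yp := {| pA := PP; pal := pi2; pbe := Zs; psplit := HZ2 |} : Point B).
  assert (Pf : pal Yp ∘ F = pal P /\ F ∘ pbe P = pbe Yp).
  { split; auto. simpl. apply (pb_ext _ _ _ _ Hpr).
    - crw HF1. rewrite HZ1; auto.
    - crw HF2. rewrite HZ2, psplit; auto. }
  set (f := exist _ F Pf : PtHom P Yp).
  destruct (hPB _ _ _ F Zs) as (A' & h' & p & Hpb).
  destruct (pb_lift _ _ _ _ Hpb _ (pbe P) (idm B)) as [b' [Hb1 Hb2]].
  { rewrite (proj2 Pf), idr; auto. }
  set (Q := {| pA := A'; pal := p; pbe := b'; psplit := Hb2 |} : Point B).
  assert (Pm : pal P ∘ h' = pal Q /\ h' ∘ pbe Q = pbe P).
  { simpl. split; auto. rewrite <- HF2. ra. rewrite (proj1 Hpb). crw HZ2. nrm. auto. }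
  set (m := exist _ h' Pm : PtHom Q P).
  exists Q, m. split.
  - exists Yp, f. split.
    + apply Pt_zeroMor. simpl. exact (proj1 Hpb).
    + intros Z g Hg. apply Pt_zeroMor in Hg. simpl in Hg.
      destruct g as [g0 [Hg1 Hg2]]. simpl in Hg.
      destruct (pb_lift _ _ _ _ Hpb _ g0 (pal Z) Hg) as [u0 [Hu1 Hu2]].
      assert (Pu : pal Q ∘ u0 = pal Z /\ u0 ∘ pbe Z = pbe Q).
      { simpl. split; auto. apply (pb_ext _ _ _ _ Hpb).
        - crw Hu1. rewrite Hg2, Hb1; auto.
        - crw Hu2. rewrite psplit, Hb2; auto. }
      exists (exist _ u0 Pu). split.
      * apply PtHom_eq. simpl. auto.
      * intros u' Hu'. destruct u' as [u1 [Hu'1 Hu'2]].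
        apply PtHom_eq. simpl.
        apply (f_equal (@proj1_sig _ _)) in Hu'. simpl in Hu'.
        apply (pb_ext _ _ _ _ Hpb).
        -- rewrite Hu', Hu1; auto.
        -- simpl in Hu'1. rewrite Hu'1, Hu2; auto.
  - destruct (zero_ex hP H B) as [zHB HzHB].
    destruct (pb_lift _ _ _ _ Hpb _ (k ∘ h) zHB) as [k' [Hk1 Hk2]].
    { apply (pb_ext _ _ _ _ Hpr).
      - crw HF1. crw HZ1. apply (zero_eq hP).
        + exact (proj1 Kq).
        + apply zm_l, zm_l; auto.
      - crw HF2. crw HZ2. nrm. apply (zero_eq hP); auto.
        rewrite comp_assoc. apply zm_r. exact (proj1 Kk). }
    exists H, k', h. split; [|split].
    + split.
      * simpl. rewrite Hk2; auto.
      * intros T g Hg. simpl in Hg.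
        destruct (proj2 Kk T (h' ∘ g)) as [v [Hv _]].
        { rewrite comp_assoc, (proj1 Pm). exact Hg. }
        destruct (proj2 Kq T (k ∘ v)) as [w [Hw _]].
        { rewrite Hv, <- HF1. ra. rewrite (cx _ _ _ (proj1 Hpb)). ra. apply zm_l, zm_l; auto. }
        assert (Ew : k' ∘ w = g).
        { apply (pb_ext _ _ _ _ Hpb).
           ++ crw Hk1. rewrite <- Hv, <- Hw. ra. auto.
           ++ crw Hk2. apply (zero_eq hP); auto. apply zm_r; auto. }
        exists w. split; auto.
        intros u' Hu'. apply (mono_comp k h mk mh). rewrite <- Hk1. ra. simpl in Hu'. rewrite Hu', Ew; auto.
    + simpl. auto.
    + exists (idm H). split; [exists (idm H); split; apply idl | apply idr].
Qed.

Theorem mainTheorem13 (C : Category) (HC : @SemiAbelian C) :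
  (@ToN C <-> (forall (H G : C) (h : Hom H G), normalMono h -> characteristic h)) /\
  ((forall (H G : C) (h : Hom H G), normalMono h -> characteristic h) <->
   (forall B : C, KerCreatesNormalSubobjects C B)).
Proof.
  split; split.
  - intros HT. apply T2. apply T1; auto.
  - apply T3; auto.
  - intros Hch. apply T1; auto. apply T3; auto.
  - apply T2.
Qed.
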